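(* For every $\eta>0$ there exists $k_0=k_0(\eta)$ such that for all $k\ge k_0$ and $n\ge2k$ the following holds. Let $P\subseteq[n]$ with $\eta\le|P|/n\le1-\eta$, and let $M$ be a matching of size $k$ in the complete graph on $[n]$, chosen uniformly at random among all such matchings. Then with probability at least $\frac56$, the number of edges $uv\in M$ with $u\in P$ and $v\notin P$ is at least $\eta k/25$. *)

(* Defs.v *)
From HB Require Import structures.
From mathcomp Require Import all_boot all_order all_algebra.
From mathcomp Require Import reals.
Set Implicit Arguments. Unset Strict Implicit. Unset Printing Implicit Defensive.
Import Order.TTheory GRing.Theory Num.Theory.

Definition Kedge (n : nat) (e : {set 'I_n}) : bool := #|e| == 2.

Definition is_matching (n : nat) (M : {set {set 'I_n}}) : bool :=
  [forall e in M, Kedge e] &&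
  [forall e1 in M, forall e2 in M, (e1 != e2) ==> [disjoint e1 & e2]].

(* The (finite) set of all matchings of size k in K_n; the random matching
   is uniform on this set. *)
Definition matchings (n k : nat) : {set {set {set 'I_n}}} :=
  [set M | is_matching M && (#|M| == k)].

(* An edge uv with u in P and v not in P (i.e. exactly one endpoint in P). *)
Definition crossing (n : nat) (P : {set 'I_n}) (e : {set 'I_n}) : bool :=
  #|e :&: P| == 1.

Definition ncross (n : nat) (P : {set 'I_n}) (M : {set {set 'I_n}}) : nat :=
  #|[set e in M | crossing P e]|.

(* Main.v *)
Require Import Defs.
From HB Require Import structures.
From mathcomp Require Import all_boot all_order all_algebra.
From mathcomp Require Import reals.
From mathcomp Require Import perm zify ring lra.
Import Order.TTheory GRing.Theory Num.Theory.

Set Implicit Arguments. Unset Strict Implicit. Unset Printing Implicit Defensive.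

Section Comb.
Variable n : nat.
Implicit Types (e : {set 'I_n}) (M : {set {set 'I_n}}) (s : {perm 'I_n}).

Definition img s M : {set {set 'I_n}} := (fun e : {set 'I_n} => s @: e) @: M.

Lemma img_match k s M : M \in matchings n k -> img s M \in matchings n k.
Proof.
rewrite !inE => /andP[/andP[/forall_inP He /forall_inP Hd] /eqP cM].
have injs : injective (fun e : {set 'I_n} => s @: e) by apply: imset_inj; exact: perm_inj.
apply/andP; split; last by rewrite card_imset // cM.
apply/andP; split.
  apply/forall_inP => e' /imsetP[e eM ->].
  by rewrite /Kedge card_imset //; [exact: He | exact: perm_inj].
apply/forall_inP => e1' /imsetP[e1 e1M ->]; apply/forall_inP => e2' /imsetP[e2 e2M ->].
apply/implyP => ne.
have ne12 : e1 != e2 by apply: contra ne => /eqP ->.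
move: (Hd e1 e1M) => /forall_inP /(_ e2 e2M) /implyP /(_ ne12) dj.
rewrite -setI_eq0 -imsetI; last by move=> x y _ _; exact: perm_inj.
by rewrite imset_eq0 setI_eq0.
Qed.

Lemma img_mem s e M : e \in M -> s @: e \in img s M.
Proof. by move=> eM; apply: imset_f. Qed.

Lemma img_inj s : injective (img s).
Proof. apply: imset_inj; apply: imset_inj; exact: perm_inj. Qed.

Lemma imsetVK s e : (s^-1)%g @: (s @: e) = e.
Proof.
rewrite -imset_comp; apply/setP => x; apply/imsetP/idP => [[y ye ->]|xe].
  by rewrite /= permK.
by exists x => //=; rewrite permK.
Qed.

Definition N1 k e := #|[set M in matchings n k | e \in M]|.
Definition N2 k e1 e2 := #|[set M in matchings n k | (e1 \in M) && (e2 \in M)]|.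

Lemma N2_le k s e1 e2 : N2 k e1 e2 <= N2 k (s @: e1) (s @: e2).
Proof.
rewrite /N2 -(card_imset _ (@img_inj s)); apply: subset_leq_card.
apply/subsetP => M' /imsetP[M]; rewrite inE => /andP[Mm /andP[h1 h2]] ->.
by rewrite inE img_match //= !img_mem.
Qed.

Lemma N2_eq k s e1 e2 : N2 k (s @: e1) (s @: e2) = N2 k e1 e2.
Proof.
apply/eqP; rewrite eqn_leq N2_le andbT.
by have := N2_le k (s^-1)%g (s @: e1) (s @: e2); rewrite !imsetVK.
Qed.

Lemma N1E k e : N1 k e = N2 k e e.
Proof. by rewrite /N1 /N2; apply: eq_card => M; rewrite !inE andbb. Qed.


Lemma perm_map_ex (s t : seq 'I_n) : uniq s -> uniq t -> size s = size t ->
  exists sg : {perm 'I_n}, map sg s = t.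
Proof.
elim: s t => [|x s IH] [|y t] //=.
  by move=> _ _ _; exists 1%g.
move=> /andP[xs us] /andP[yt ut] [st].
have [sg Hsg] := IH t us ut st.
exists (sg * tperm (sg x) y)%g.
rewrite permM tpermL; congr (_ :: _).
rewrite -Hsg; apply/eq_in_map => z zs; rewrite permM tpermD //.
  by apply: contraNneq xs => /perm_inj ->.
by apply: contraNneq yt => ->; rewrite -Hsg map_f.
Qed.

Lemma imset2E (sg : {perm 'I_n}) x y : sg @: [set x; y] = [set sg x; sg y].
Proof. by rewrite imsetU1 imset_set1. Qed.

Lemma dj2 (T : finType) (x y z w : T) : [disjoint [set x; y] & [set z; w]] ->
  [&& x != z, x != w, y != z & y != w].
Proof.
rewrite -setI_eq0 => /eqP H.
have F a : a \in [set x; y] -> a \in [set z; w] -> False.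
  move=> h1 h2; have : a \in [set x; y] :&: [set z; w] by rewrite inE h1 h2.
  by rewrite H inE.
apply/and4P; split; apply/negP => /eqP E; subst.
- by apply: (F z); rewrite !inE eqxx ?orbT.
- by apply: (F w); rewrite !inE eqxx ?orbT.
- by apply: (F z); rewrite !inE eqxx ?orbT.
- by apply: (F w); rewrite !inE eqxx ?orbT.
Qed.

Definition Ed := [set e : {set 'I_n} | #|e| == 2].
Definition D2 := [set p : {set 'I_n} * {set 'I_n} |
   [&& #|p.1| == 2, #|p.2| == 2 & [disjoint p.1 & p.2]]].

Lemma N1_const k e e' : e \in Ed -> e' \in Ed -> N1 k e = N1 k e'.
Proof.
rewrite !inE => /cards2P[x [y [xy ->]]] /cards2P[x' [y' [xy' ->]]].
have [sg Hsg] : exists sg : {perm 'I_n}, map sg [:: x; y] = [:: x'; y'].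
  by apply: perm_map_ex; rewrite //= inE ?xy ?xy'.
move: Hsg => /= [<- <-].
by rewrite !N1E -(N2_eq k sg) !imset2E.
Qed.

Lemma N2_const k p p' : p \in D2 -> p' \in D2 -> N2 k p.1 p.2 = N2 k p'.1 p'.2.
Proof.
case: p => e1 e2; case: p' => e1' e2'; rewrite !inE /=.
move=> /and3P[/cards2P[x [y [xy ->]]] /cards2P[z [w [zw ->]]] dj].
move=> /and3P[/cards2P[x' [y' [xy' ->]]] /cards2P[z' [w' [zw' ->]]] dj'].
have [sg Hsg] : exists sg : {perm 'I_n}, map sg [:: x; y; z; w] = [:: x'; y'; z'; w'].
  apply: perm_map_ex => //.
- move: (dj2 dj) => /and4P[h1 h2 h3 h4].
  by rewrite /= !inE !negb_or xy zw h1 h2 h3 h4.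
- move: (dj2 dj') => /and4P[h1 h2 h3 h4].
  by rewrite /= !inE !negb_or xy' zw' h1 h2 h3 h4.
move: Hsg => /= [<- <- <- <-].
by rewrite /= -(N2_eq k sg) !imset2E.
Qed.


Lemma cardE_sum (T : finType) (A : {pred T}) (P : pred T) :
  #|[set x in A | P x]| = \sum_(x in A) P x.
Proof.
rewrite -sum1_card big_mkcond /= [RHS]big_mkcond /=; apply: eq_bigr => x _.
by rewrite !inE; case: (x \in A); case: (P x).
Qed.

Lemma const_sum (T : finType) (A : {pred T}) (c : pred T) (F : T -> nat) :
  {in A &, forall x y, F x = F y} ->
  (\sum_(x in A) c x * F x) * #|A| = #|[set x in A | c x]| * \sum_(x in A) F x.
Proof.
move=> HF; rewrite cardE_sum -sum1_card !big_distrl /=; apply: eq_bigr => x xA.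
rewrite !big_distrr /=; apply: eq_bigr => y yA; by rewrite (HF x y) // muln1.
Qed.

Definition fc (c : pred {set 'I_n}) M := #|[set e in M | c e]|.
Definition gc (c : pred {set 'I_n}) M :=
  #|[set p in D2 | [&& c p.1, c p.2, p.1 \in M & p.2 \in M]]|.

Lemma match_sub k M e : M \in matchings n k -> e \in M -> e \in Ed.
Proof.
rewrite !inE => /andP[/andP[/forall_inP He _] _] eM; exact: He.
Qed.

Lemma match_dj k M e1 e2 : M \in matchings n k -> e1 \in M -> e2 \in M ->
  e1 != e2 -> [disjoint e1 & e2].
Proof.
rewrite !inE => /andP[/andP[_ /forall_inP Hd] _] h1 h2 ne.
by move: (Hd e1 h1) => /forall_inP /(_ e2 h2) /implyP /(_ ne).
Qed.

Lemma sum_fc k c : \sum_(M in matchings n k) fc c M = \sum_(e in Ed) c e * N1 k e.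
Proof.
transitivity (\sum_(M in matchings n k) \sum_(e in Ed) (c e && (e \in M))).
  apply: eq_bigr => M HM; rewrite /fc -cardE_sum; apply: eq_card => e; rewrite !inE.
  case eM: (e \in M); last by rewrite !andbF.
  by have := match_sub HM eM; rewrite inE => ->; rewrite andbC.
rewrite exchange_big; apply: eq_bigr => e _; rewrite /N1 cardE_sum big_distrr /=.
by apply: eq_bigr => M _; case: (c e); case: (e \in M).
Qed.

Lemma sum_gc k c : \sum_(M in matchings n k) gc c M =
  \sum_(p in D2) (c p.1 && c p.2) * N2 k p.1 p.2.
Proof.
transitivity (\sum_(M in matchings n k) \sum_(p in D2)
     [&& c p.1, c p.2, p.1 \in M & p.2 \in M]).
  by apply: eq_bigr => M HM; rewrite /gc cardE_sum.
rewrite exchange_big; apply: eq_bigr => p _; rewrite /N2 cardE_sum big_distrr /=.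
by apply: eq_bigr => M _; case: (c p.1); case: (c p.2); case: (p.1 \in M); case: (p.2 \in M).
Qed.


Lemma fc_sq k c M : M \in matchings n k -> fc c M * fc c M = fc c M + gc c M.
Proof.
move=> HM; rewrite /fc /gc -cardsX.
set F := [set e in M | c e].
rewrite -(cardsID [set p : {set 'I_n} * {set 'I_n} | p.1 == p.2] (setX F F)).
congr (_ + _).
  have -> : setX F F :&: [set p | p.1 == p.2] = (fun e => (e, e)) @: F.
    apply/setP => [[e1 e2]]; rewrite !inE /=; apply/idP/imsetP.
      by move=> /andP[/and3P[h1 _ _] /eqP <-]; exists e1; rewrite // inE.
    by move=> [e h [-> ->]]; move: h; rewrite inE => /andP[-> ->]; rewrite eqxx.
  by rewrite card_imset // => x y [].
apply: eq_card => [[e1 e2]]; rewrite !inE /=.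
apply/idP/idP.
  move=> /andP[ne /andP[/andP[h1 c1] /andP[h2 c2]]].
  have := match_sub HM h1; have := match_sub HM h2; rewrite !inE => -> ->.
  by rewrite (match_dj HM h1 h2 ne) c1 c2 h1 h2.
move=> /andP[/and3P[k1 k2 dj] /and4P[c1 c2 h1 h2]].
rewrite h1 h2 c1 c2 !andbT; apply/eqP => E; subst e2.
by move: dj; rewrite -setI_eq0 setIid => /eqP E0; move: k1; rewrite E0 cards0.
Qed.


Lemma card_Ed : #|Ed| = 'C(n, 2).
Proof. by rewrite /Ed card_draws card_ord. Qed.

Lemma card_D2 : #|D2| = 'C(n, 2) * 'C(n - 2, 2).
Proof.
rewrite /D2 -sum1dep_card -(pair_big_dep (fun e1 : {set 'I_n} => #|e1| == 2)
   (fun e1 e2 => (#|e2| == 2) && [disjoint e1 & e2]) (fun _ _ => 1)) /=.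
rewrite (eq_bigr (fun _ => 'C(n - 2, 2))) => [|e1 /eqP h].
  by rewrite sum_nat_const -card_Ed /Ed cardsE.
rewrite sum1dep_card.
have -> : #|[set e2 : {set 'I_n} | (#|e2| == 2) && [disjoint e1 & e2]]| =
          #|[set e2 : {set 'I_n} | e2 \subset ~: e1 & #|e2| == 2]|.
  by apply: eq_card => e2; rewrite !inE disjoint_sym disjoints_subset andbC.
rewrite cards_draws; congr 'C(_, _).
by have := cardsC e1; rewrite h card_ord; lia.
Qed.

Lemma X2_le (c : pred {set 'I_n}) :
  #|[set p in D2 | c p.1 && c p.2]| <= #|[set e in Ed | c e]| * #|[set e in Ed | c e]|.
Proof.
rewrite -cardsX; apply: subset_leq_card; apply/subsetP => [[e1 e2]].
by rewrite !inE /= => /andP[/and3P[-> -> _] /andP[-> ->]].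
Qed.

Lemma X1_ge (P : {set 'I_n}) :
  #|P| * #|~: P| <= #|[set e in Ed | crossing P e]|.
Proof.
rewrite -cardsX.
have inj : {in setX P (~: P) &, injective (fun p : 'I_n * 'I_n => [set p.1; p.2])}.
  move=> [x y] [x' y']; rewrite !inE /= => /andP[xP yP] /andP[xP' yP'] E.
  have hx : x \in [set x'; y'] by rewrite -E !inE eqxx.
  have hy : y \in [set x'; y'] by rewrite -E !inE eqxx orbT.
  move: hx hy; rewrite !inE => /orP[/eqP hx|/eqP hx] /orP[/eqP hy|/eqP hy]; subst.
  - by rewrite xP in yP.
  - by [].
  - by rewrite xP in yP'.
  - by rewrite xP in yP'.
rewrite -(card_in_imset inj); apply: subset_leq_card; apply/subsetP => e.
move=> /imsetP[[x y]]; rewrite !inE /= => /andP[xP yP] ->.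
have xy : x != y by apply: contraNneq yP => <-.
rewrite cards2 xy /crossing /=.
have -> : [set x; y] :&: P = [set x].
  apply/setP => z; rewrite !inE; case: (z =P x) => [->|_]; first by rewrite xP.
  by case: (z =P y) => [->|//]; rewrite (negbTE yP).
by rewrite cards1.
Qed.


Lemma fcT k M : M \in matchings n k -> fc predT M = k.
Proof.
rewrite /fc inE => /andP[_ /eqP <-]; apply: eq_card => e; by rewrite !inE andbT.
Qed.

Lemma sumN1 k : \sum_(e in Ed) N1 k e = k * #|matchings n k|.
Proof.
transitivity (\sum_(e in Ed) predT e * N1 k e); first by apply: eq_bigr => e _; rewrite mul1n.
rewrite -sum_fc (eq_bigr (fun _ => k)) => [|M HM]; last exact: fcT HM.
by rewrite sum_nat_const mulnC.
Qed.

Lemma sumN2 k : \sum_(p in D2) N2 k p.1 p.2 = (k * k - k) * #|matchings n k|.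
Proof.
transitivity (\sum_(p in D2) (predT p.1 && predT p.2) * N2 k p.1 p.2).
  by apply: eq_bigr => e _; rewrite mul1n.
rewrite -sum_gc (eq_bigr (fun _ => k * k - k)) => [|M HM].
  by rewrite sum_nat_const mulnC.
by have := fc_sq predT HM; rewrite (fcT HM) => ->; rewrite addKn.
Qed.

Lemma S1_eq k c : (\sum_(M in matchings n k) fc c M) * #|Ed| =
  #|[set e in Ed | c e]| * (k * #|matchings n k|).
Proof.
rewrite sum_fc const_sum ?sumN1 // => e e' he he'; exact: N1_const.
Qed.

Lemma G_eq k c : (\sum_(M in matchings n k) gc c M) * #|D2| =
  #|[set p in D2 | c p.1 && c p.2]| * ((k * k - k) * #|matchings n k|).
Proof.
rewrite sum_gc (@const_sum _ D2 (fun p => c p.1 && c p.2) (fun p => N2 k p.1 p.2)) ?sumN2 //.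
move=> p p' hp hp'; exact: N2_const.
Qed.

Lemma sq_eq k c : \sum_(M in matchings n k) fc c M * fc c M =
  \sum_(M in matchings n k) fc c M + \sum_(M in matchings n k) gc c M.
Proof. by rewrite -big_split; apply: eq_bigr => M HM; rewrite (fc_sq c HM). Qed.

End Comb.


Lemma bin2_2 n : 2 * 'C(n, 2) = n * n.-1.
Proof. by rewrite -mul_bin_diag bin1. Qed.

Unset Implicit Arguments. Set Strict Implicit.

Local Open Scope ring_scope.

Lemma L1 (R : realType) (N a b eta X1 E : R) :
  0 < eta -> 0 < N -> a + b = N -> eta * N <= a -> a <= (1 - eta) * N ->
  a * b <= X1 -> 2 * E = N * (N - 1) -> 0 < E -> eta <= X1 / E.
Proof.
move=> he hN hab h1 h2 hX hE hE0.
rewrite ler_pdivlMr //.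
have h3 : eta <= 1 / 2 by nra.
have h4 : eta * (1 - eta) * N * N <= a * b by nra.
nra.
Qed.

Lemma L2 (R : realType) (m B k eta q E C S1 G X2 V : R) :
  0 <= m -> 0 <= B -> 0 < eta -> 20 <= k * eta -> 0 < k -> eta <= q ->
  0 < C -> E <= 27 / 25 * C -> 0 < E ->
  S1 = k * m * q ->
  G * (E * C) <= X2 * k * k * m -> X2 <= (q * E) * (q * E) ->
  V = S1 + G - 2 * (k * q) * S1 + (k * q) ^+ 2 * m ->
  B * (k * q - eta * k / 25) ^+ 2 <= V ->
  6 * B <= m.
Proof.
move=> hm hB he hke hk hq hC hEC hE hS1 hG hX2 hV hB2.
have hkq : 20 <= k * q by nra.
have hG2 : G * (E * C) <= (q * E) * (q * E) * k * k * m.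
  apply: le_trans hG _.
  have hkkm : 0 <= k * k * m by apply: mulr_ge0 => //; nra.
  have := ler_wpM2r hkkm hX2; rewrite !mulrA => h; exact: h.
have hG3 : G * C <= q * q * E * k * k * m.
  have : (G * C) * E <= (q * q * E * k * k * m) * E by move: hG2; rewrite -!mulrA => h; nra.
  by rewrite ler_pM2r.
have hG4 : G <= 27 / 25 * (q * q * k * k * m).
  have : G * C <= 27 / 25 * (q * q * k * k * m) * C.
    apply: (le_trans hG3); have : 0 <= q * q * k * k * m.
      by apply: mulr_ge0 => //; apply: mulr_ge0 => //; nra.
    nra.
  by rewrite ler_pM2r.
have hV2 : V <= m * (k * q) + 2 / 25 * (k * q) * (k * q) * m.
  rewrite hV hS1; nra.
have hmt : 24 / 25 * (k * q) <= k * q - eta * k / 25 by nra.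
have hsq : (24 / 25 * (k * q)) ^+ 2 <= (k * q - eta * k / 25) ^+ 2.
  by rewrite ler_sqr ?nnegrE //; nra.
set x := k * q in hkq hV2 hmt hsq hB2.
have : B * (576 / 625 * x * x) <= m * x + 2 / 25 * x * x * m.
  apply: le_trans hV2; apply: le_trans hB2; apply: ler_wpM2l => //.
  by move: hsq; rewrite !expr2; nra.
move=> hfin.
have hx : 0 < x by lra.
have : B * (576 / 625 * x) <= m + 2 / 25 * x * m.
  have : (B * (576 / 625 * x)) * x <= (m + 2 / 25 * x * m) * x by nra.
  by rewrite ler_pM2r.
nra.
Qed.

Lemma cheb (R : realType) (T : finType) (A : {pred T}) (f : T -> R) (mu t : R) :
  t <= mu ->
  #|[set x in A | ~~ (t <= f x)]|%:R * (mu - t) ^+ 2 <= \sum_(x in A) (f x - mu) ^+ 2.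
Proof.
move=> htm.
have -> : #|[set x in A | ~~ (t <= f x)]| = \sum_(x in A) (~~ (t <= f x) : nat).
  rewrite -sum1_card big_mkcond /= [RHS]big_mkcond /=; apply: eq_bigr => x _.
  by rewrite !inE; case: (x \in A); case: (t <= f x).
rewrite natr_sum mulr_suml; apply: ler_sum => x _.
case: (boolP (t <= f x)) => h /=; first by rewrite mul0r sqr_ge0.
rewrite mul1r; move: h; rewrite -ltNge => h.
rewrite -[(f x - mu) ^+ 2]sqrrN opprB ler_sqr ?nnegrE; lra.
Qed.

Lemma sum_sq (R : realType) (T : finType) (A : {pred T}) (f : T -> R) (mu : R) :
  \sum_(x in A) (f x - mu) ^+ 2 =
  \sum_(x in A) f x * f x - 2 * mu * \sum_(x in A) f x + mu ^+ 2 * #|A|%:R.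
Proof.
rewrite (eq_bigr (fun x => f x * f x - 2 * mu * f x + mu ^+ 2)); last first.
  by move=> x _; rewrite sqrrB expr2 mulr_natl; ring.
rewrite big_split sumrB /= -mulr_sumr sumr_const.
by rewrite mulr_natr.
Qed.

Lemma card_split (T : finType) (A : {pred T}) (P : pred T) :
  #|[set x in A | P x]| + #|[set x in A | ~~ P x]| = #|A|.
Proof.
rewrite -!sum1_card big_mkcond /= [X in _ + X]big_mkcond /= -big_split /=.
rewrite [RHS]big_mkcond /=; apply: eq_bigr => x _.
by rewrite !inE; case: (x \in A); case: (P x).
Qed.

Lemma L0 (R : realType) (N E C : R) : 54 <= N -> 2 * E = N * (N - 1) ->
  2 * C = (N - 2) * (N - 3) -> [/\ 0 < E, 0 < C & E <= 27 / 25 * C].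
Proof. move=> h1 h2 h3; split; nra. Qed.

Lemma Lt (R : realType) (eta q k : R) : 0 < eta -> eta <= q -> 0 <= k ->
  eta * k / 25 <= k * q.
Proof. move=> h1 h2 h3; nra. Qed.

Theorem lemma2p11 (R : realType) (eta : R) :
  0 < eta ->
  exists k0 : nat, forall k n : nat, (k0 <= k)%N -> (2 * k <= n)%N ->
    forall P : {set 'I_n},
      eta <= (#|P|%:R / n%:R) <= 1 - eta ->
      (* Pr[ncross P M >= eta k / 25] >= 5/6, M uniform over k-matchings *)
      (5 / 6 : R) * (#|matchings n k|%:R) <=
        (#|[set M in matchings n k | eta * k%:R / 25 <= (ncross P M)%:R]|%:R).
Proof.
move=> he.
pose K := Num.bound (20 / eta).
exists (maxn 27 K) => k n hk hn P hP.
have k27 : (27 <= k)%N by apply: leq_trans hk; rewrite leq_maxl.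
have kK : (K <= k)%N by apply: leq_trans hk; rewrite leq_maxr.
have hke : 20 <= k%:R * eta.
  have hb := @archi_boundP R (20 / eta) (ltW (divr_gt0 (ltr0n _ 20) he)).
  have : 20 / eta <= k%:R by apply: (le_trans (ltW hb)); rewrite ler_nat.
  by rewrite ler_pdivrMr.
have n54 : (54 <= n)%N by lia.
set c := crossing P.
set Mt := matchings n k.
set N : R := n%:R.
have hN : 54 <= N by rewrite /N (ler_nat R 54 n).
set a : R := #|P|%:R.
set b : R := #|~: P|%:R.
have hab : a + b = N by rewrite /a /b -natrD cardsC card_ord.
move/andP: hP => [hP1 hP2].
have hN0 : 0 < N by lra.
have ha1 : eta * N <= a by rewrite -ler_pdivlMr.
have ha2 : a <= (1 - eta) * N by rewrite -ler_pdivrMr.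
set E : R := 'C(n, 2)%:R.
have hE : 2 * E = N * (N - 1).
  have := bin2_2 n; move/(congr1 (fun x => x%:R : R)); rewrite !natrM /= -/E => ->.
  by rewrite -subn1 natrB //; lia.
set C : R := 'C(n - 2, 2)%:R.
have hC : 2 * C = (N - 2) * (N - 3).
  have := bin2_2 (n - 2); move/(congr1 (fun x => x%:R : R)); rewrite !natrM /= -/C => ->.
  have -> : (n - 2).-1 = (n - 3)%N by lia.
  by rewrite !natrB //; lia.
have [hE0 hC0 hEC] := @L0 R N E C hN hE hC.
set X1 : R := #|[set e in Ed n | c e]|%:R.
have hX1 : a * b <= X1 by rewrite /a /b /X1 -natrM ler_nat X1_ge.
set X2 : R := #|[set p in D2 n | c p.1 && c p.2]|%:R.
have hX2 : X2 <= X1 * X1 by rewrite /X2 /X1 -natrM ler_nat X2_le.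
have hX20 : 0 <= X2 := ler0n _ _.
set m : R := #|Mt|%:R.
set S1 : R := \sum_(M in Mt) (fc c M)%:R.
set G : R := \sum_(M in Mt) (gc c M)%:R.
have hS1 : S1 * E = X1 * (k%:R * m).
  have := S1_eq k c; move/(congr1 (fun x => x%:R : R)).
  by rewrite !natrM natr_sum card_Ed.
have hG : G * (E * C) <= X2 * k%:R * k%:R * m.
  have h : ((\sum_(M in Mt) gc c M) * #|D2 n| <= #|[set p in D2 n | c p.1 && c p.2]| * (k * k * #|Mt|))%N.
    by rewrite G_eq leq_mul2l leq_mul2r leq_subr !orbT.
  move: h; rewrite -(ler_nat R) !natrM natr_sum card_D2 natrM -/E -/C -/G -/X2 -/m.
  by rewrite !mulrA.
set q : R := X1 / E.
have hq : eta <= q.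
  by rewrite /q; exact: (@L1 R N a b eta X1 E he hN0 hab ha1 ha2 hX1 hE hE0).
have hqE : q * E = X1 by rewrite /q divfK // lt0r_neq0.
have hS1' : S1 = k%:R * m * q.
  apply: (mulIf (lt0r_neq0 hE0)); rewrite /= hS1 -hqE; ring.
set t : R := eta * k%:R / 25.
have htm : t <= k%:R * q.
  by rewrite /t; apply: Lt.
have hcheb := @cheb R _ Mt (fun M => (fc c M)%:R : R) _ _ htm.
rewrite (@sum_sq R _ Mt) in hcheb.
have hsq : \sum_(M in Mt) (fc c M)%:R * (fc c M)%:R = S1 + G :> R.
  have := sq_eq k c; move/(congr1 (fun x => x%:R : R)).
  by rewrite natrD !natr_sum; under eq_bigr do rewrite natrM.
rewrite hsq -/S1 -/m in hcheb.
set B : R := #|[set x in Mt | ~~ (t <= (fc c x)%:R)]|%:R.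
have hm0 : 0 <= m := ler0n _ _.
have hB0 : 0 <= B := ler0n _ _.
have hk0 : 0 < k%:R :> R by rewrite ltr0n (leq_ltn_trans _ k27).
have hX2' : X2 <= (q * E) * (q * E) by rewrite hqE.
have h6 : 6 * B <= m.
  move: hcheb; set V := (X in _ <= X) => hcheb.
  have hV : V = S1 + G - 2 * (k%:R * q) * S1 + (k%:R * q) ^+ 2 * m by [].
  exact: (@L2 R m B k%:R eta q E C S1 G X2 V hm0 hB0 he hke hk0 hq hC0 hEC hE0 hS1' hG hX2' hV hcheb).
have hsplit := @card_split _ Mt (fun M => t <= (fc c M)%:R).
move/(congr1 (fun x => x%:R : R)): hsplit; rewrite natrD -/B -/m => hsplit.
rewrite /ncross -/c -/Mt.
have -> : #|[set M in Mt | eta * k%:R / 25 <= (#|[set e in M | c e]|)%:R]|%:R = m - B.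
  by rewrite -hsplit; ring.
lra.
Qed.
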